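(* For every integer $d\ge 2$ there is a constant $C_d>0$ such that for every positive integer $N$, \[ \mathfrak{C}_d(N) \geq \left(2 + \frac{2}{d+1} - \frac{C_d}{N}\right)(2N+1)^{d^2 + 1}. \]
   Context: For positive integers $d,N$, let $\mathrm{Mat}_d(\mathbb{Z},N)$ denote the set of $d\times d$ matrices with all entries in $[-N,N]\cap\mathbb{Z}$, and let $\mathfrak{C}_d(N)$ be the number of pairs $(A,B)\in \mathrm{Mat}_d(\mathbb{Z},N)^2$ with $AB=BA$. *)

(* Defs.v *)
From mathcomp Require Import all_boot all_order all_algebra.
Set Implicit Arguments. Unset Strict Implicit. Unset Printing Implicit Defensive.
Import Order.TTheory GRing.Theory Num.Theory.
Local Open Scope ring_scope.

(* An element k of 'I_(2N+1) encodes the integer k - N in [-N, N]. *)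
Definition shift_int (N : nat) (k : 'I_(2 * N + 1)) : int := (k%:Z - N%:Z).

Definition to_intmx (d N : nat) (A : 'M['I_(2 * N + 1)]_d) : 'M[int]_d :=
  \matrix_(i, j) shift_int (A i j).

Definition in_Mat (d N : nat) (A : 'M[int]_d) : bool :=
  [forall i, forall j, `|A i j| <= N%:Z].

(* frak C_d(N) = #{(A,B) in Mat_d(Z,N)^2 | AB = BA}, counted via the
   bijective encoding 'M['I_(2N+1)]_d <-> Mat_d(Z,N). *)
Definition commuting_count (d N : nat) : nat :=
  #|[set p : 'M['I_(2 * N + 1)]_d * 'M['I_(2 * N + 1)]_d |
      to_intmx p.1 *m to_intmx p.2 == to_intmx p.2 *m to_intmx p.1]|.

(* Main.v *)
Require Import Defs.
From mathcomp Require Import all_boot all_order all_algebra.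
From mathcomp Require Import zify ring lra.
Set Implicit Arguments. Unset Strict Implicit. Unset Printing Implicit Defensive.
Import Order.TTheory GRing.Theory Num.Theory.
Local Open Scope ring_scope.

Lemma shift_int_inj N : injective (@shift_int N).
Proof.
move=> a b; rewrite /shift_int => /(congr1 (fun z => z + N%:Z)); rewrite !subrK => -[] h.
exact: val_inj.
Qed.

Lemma to_intmx_inj d N : injective (@to_intmx d N).
Proof.
move=> A B h; apply/matrixP=> i j; have := congr1 (fun X : 'M[int]_d => X i j) h.
rewrite !mxE; exact: shift_int_inj.
Qed.

Lemma midN_proof N : (N < 2 * N + 1)%N. Proof. lia. Qed.
Definition midN N : 'I_(2 * N + 1) := Ordinal (midN_proof N).

Definition scal_enc d N (a : 'I_(2 * N + 1)) : 'M['I_(2 * N + 1)]_d :=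
  \matrix_(i, j) if i == j then a else midN N.

Lemma to_intmx_scal d N a : to_intmx (@scal_enc d N a) = (shift_int a)%:M.
Proof.
apply/matrixP=> i j; rewrite !mxE; case: eqP => _ /=; rewrite ?mulr1n ?mulr0n //.
by rewrite /shift_int /= subrr.
Qed.

Definition Simg d N := [set @scal_enc d N a | a in 'I_(2 * N + 1)].

Lemma scal_enc_inj d N : injective (@scal_enc d.+1 N).
Proof.
move=> a b /matrixP /(_ ord0 ord0); by rewrite !mxE eqxx.
Qed.

Lemma card_Simg d N : #|Simg d.+1 N| = (2 * N + 1)%N.
Proof. by rewrite card_imset ?card_ord //; apply: scal_enc_inj. Qed.

Lemma SimgP d N (A : 'M['I_(2 * N + 1)]_d.+1) :
  (A \in Simg d.+1 N) <-> exists k : int, to_intmx A = k%:M.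
Proof.
split.
  by case/imsetP=> a _ ->; exists (shift_int a); rewrite to_intmx_scal.
case=> k h; apply/imsetP; exists (A ord0 ord0) => //.
apply: to_intmx_inj; rewrite to_intmx_scal h; congr (_ %:M).
by have := congr1 (fun X : 'M[int]_d.+1 => X ord0 ord0) h; rewrite !mxE eqxx mulr1n => <-.
Qed.

Definition addc N (c : nat) (x : 'I_(2 * N + 1)) : 'I_(2 * N + 1) := insubd x (x + c)%N.
Definition shiftmx d N (c : nat) (A : 'M['I_(2 * N + 1)]_d) : 'M['I_(2 * N + 1)]_d :=
  \matrix_(i, j) if i == j then addc c (A i j) else A i j.
Definition valid d N (c : nat) (A : 'M['I_(2 * N + 1)]_d) :=
  [forall i, (A i i + c < 2 * N + 1)%N].
Definition tp d N (A B : 'M['I_(2 * N + 1)]_d) :=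
  [exists c : 'I_(2 * N + 1), valid c A && (B == shiftmx c A)].

Lemma tp_int d N (A B : 'M['I_(2 * N + 1)]_d) :
  tp A B -> exists c : nat, to_intmx B = to_intmx A + (c%:Z)%:M.
Proof.
case/existsP=> c /andP[/forallP v /eqP ->]; exists c; apply/matrixP=> i j.
rewrite !mxE; case: eqP => [<-|_] /=; rewrite ?mulr1n ?mulr0n ?addr0 //.
rewrite /shift_int /addc val_insubd v PoszD; ring.
Qed.
Definition cm d N (A B : 'M['I_(2 * N + 1)]_d) :=
  to_intmx A *m to_intmx B == to_intmx B *m to_intmx A.

Lemma bool_ineq (a b t1 t2 e c : bool) :
  (a ==> c) -> (b ==> c) -> (t1 ==> c) -> (t2 ==> c) ->
  (a && t1 ==> b) -> (b && t1 ==> a) -> (a && t2 ==> b) -> (b && t2 ==> a) ->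
  (t1 && t2 ==> e) ->
  (a + b + t1 + t2 <= c + 2 * (a * b) + e)%N.
Proof. by case: a; case: b; case: t1; case: t2; case: e; case: c. Qed.

Lemma pointwise d N (A B : 'M['I_(2 * N + 1)]_d.+1) :
  ((A \in Simg d.+1 N) + (B \in Simg d.+1 N) + tp A B + tp B A <=
   cm A B + 2 * ((A \in Simg d.+1 N) * (B \in Simg d.+1 N)) + (A == B))%N.
Proof.
apply: bool_ineq; apply/implyP.
- by move/SimgP=> [k h]; rewrite /cm h scalar_mxC.
- by move/SimgP=> [k h]; rewrite /cm h scalar_mxC.
- by case/tp_int=> c h; rewrite /cm h mulmxDl mulmxDr scalar_mxC.
- by case/tp_int=> c h; rewrite /cm h mulmxDl mulmxDr scalar_mxC.
- case/andP=> /SimgP[k hk] /tp_int[c hc]; apply/SimgP; exists (k + c%:Z).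
  by rewrite hc hk raddfD.
- case/andP=> /SimgP[k hk] /tp_int[c hc]; apply/SimgP; exists (k - c%:Z).
  have -> : to_intmx A = to_intmx B - (c%:Z)%:M by rewrite hc addrK.
  by rewrite hk raddfB.
- case/andP=> /SimgP[k hk] /tp_int[c hc]; apply/SimgP; exists (k - c%:Z).
  have -> : to_intmx B = to_intmx A - (c%:Z)%:M by rewrite hc addrK.
  by rewrite hk raddfB.
- case/andP=> /SimgP[k hk] /tp_int[c hc]; apply/SimgP; exists (k + c%:Z).
  by rewrite hc hk raddfD.
- case/andP=> /tp_int[c1 h1] /tp_int[c2 h2]; apply/eqP/to_intmx_inj.
  have h0 : (c1%:Z + c2%:Z)%:M = 0 :> 'M[int]_d.+1.
    by apply: (@addrI _ (to_intmx A)); rewrite addr0 raddfD addrA -h1 -h2.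
  have := congr1 (fun X : 'M[int]_d.+1 => X ord0 ord0) h0.
  rewrite !mxE eqxx mulr1n => /eqP; rewrite -PoszD eqz_nat addn_eq0 => /andP[/eqP c10 _].
  by rewrite h1 c10 raddf0 addr0.
Qed.
Lemma card_sum (T : finType) (P : {pred T}) : #|P| = (\sum_x (x \in P : nat))%N.
Proof. by rewrite -sum1_card big_mkcond /=; apply: eq_bigr => x _; case: (x \in P). Qed.

Definition Fv N (c : nat) d (ij : 'I_d * 'I_d) : pred 'I_(2 * N + 1) :=
  if ij.1 == ij.2 then (fun x : 'I_(2 * N + 1) => (x + c < 2 * N + 1)%N) else predT.

Lemma valid_family d N c :
  [set A : 'M['I_(2 * N + 1)]_d | valid c A] =
  [set Matrix f | f in (family (@Fv N c d) : simpl_pred {ffun 'I_d * 'I_d -> 'I_(2 * N + 1)})].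
Proof.
apply/setP => A; rewrite inE; apply/idP/imsetP.
  move/forallP=> v; case: A v => f v; exists f => //.
  apply/familyP => -[i j]; rewrite /Fv /=; case: eqP => [<-|] //.
  exact: v.
case=> f /familyP fF ->; apply/forallP => i.
by have := fF (i, i); rewrite /Fv /= eqxx.
Qed.

Lemma sum_lt n k : (\sum_(x < n) ((x < k)%N : nat))%N = minn n k.
Proof.
elim: n => [|n IH]; first by rewrite big_ord0 min0n.
rewrite big_ord_recr /= IH; case: ltnP => /= h; lia.
Qed.

Lemma card_lt_ord n k : #|[pred x : 'I_n | (x < k)%N]| = minn n k.
Proof. by rewrite card_sum -sum_lt. Qed.

Lemma card_Fv_diag N (c : 'I_(2 * N + 1)) d (i : 'I_d) :
  #|@Fv N c d (i, i)| = (2 * N + 1 - c)%N.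
Proof.
rewrite /Fv /= eqxx -[RHS](minn_idPr (leq_subr c (2 * N + 1))) -card_lt_ord.
by apply: eq_card => x; rewrite !inE /=; apply/idP/idP => h; lia.
Qed.

Lemma card_Fv_off N (c : nat) d (i j : 'I_d) : i != j ->
  #|@Fv N c d (i, j)| = (2 * N + 1)%N.
Proof. by rewrite /Fv /= => /negbTE ->; rewrite card_ord. Qed.

Lemma card_valid d N (c : 'I_(2 * N + 1)) :
  #|[set A : 'M['I_(2 * N + 1)]_d | valid c A]| =
    ((2 * N + 1 - c) ^ d * (2 * N + 1) ^ (d * d.-1))%N.
Proof.
rewrite valid_family card_imset; last by move=> f g [].
rewrite card_family foldrE big_map big_enum /=.
transitivity (\prod_(i : 'I_d) \prod_(j : 'I_d) #|@Fv N c d (i, j)|)%N.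
  by rewrite pair_big; apply: eq_bigr => -[i j].
transitivity (\prod_(i : 'I_d) ((2 * N + 1 - c) * (2 * N + 1) ^ d.-1))%N.
  apply: eq_bigr => i _; rewrite (bigD1 i) //= card_Fv_diag; congr (_ * _)%N.
  rewrite (eq_bigr (fun _ => 2 * N + 1)%N); last first.
    by move=> j ji; rewrite card_Fv_off // eq_sym.
  by rewrite prod_nat_const cardC1 card_ord.
by rewrite prod_nat_const card_ord expnMn -expnM (mulnC d.-1).
Qed.
Lemma pow_step n d : (n.+1 ^ d.+1 <= n ^ d.+1 + d.+1 * n.+1 ^ d)%N.
Proof.
elim: d => [|d IH]; first by rewrite !expn1 expn0 muln1 addn1.
rewrite [(n.+1 ^ d.+2)%N]expnS; apply: leq_trans (leq_mul (leqnn n.+1) IH) _.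
have ha : (n ^ d.+1 <= n.+1 * n.+1 ^ d)%N.
  by rewrite -expnS leq_exp2r.
rewrite [(n ^ d.+2)%N]expnS [(n.+1 ^ d.+1)%N]expnS.
move: ha; set a := (n ^ d.+1)%N; set b := (n.+1 ^ d)%N => ha; nia.
Qed.

Lemma sum_pow n d : (n ^ d.+1 <= d.+1 * \sum_(c < n) (n - c) ^ d)%N.
Proof.
elim: n => [|n IH]; first by rewrite exp0n.
rewrite big_ord_recl /= subn0 mulnDr.
under eq_bigr => i _ do rewrite /bump /= add1n subSS.
apply: leq_trans (pow_step n d) _; rewrite addnC; apply: leq_add => //.
Qed.

Lemma count_eq d N : commuting_count d N = (\sum_A \sum_B (@cm d N A B : nat))%N.
Proof.
rewrite /commuting_count card_sum pair_big /=; apply: eq_bigr => p _.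
by rewrite inE.
Qed.

Lemma V_lb d N :
  (\sum_(c : 'I_(2 * N + 1)) #|[set A : 'M['I_(2 * N + 1)]_d.+1 | valid c A]|
    <= \sum_A \sum_B (@tp d.+1 N A B : nat))%N.
Proof.
rewrite (eq_bigr (fun c : 'I_(2 * N + 1) => \sum_(A : 'M['I_(2 * N + 1)]_d.+1) (A \in [set A : 'M['I_(2 * N + 1)]_d.+1 | valid c A] : nat))%N); last first.
  by move=> c _; rewrite card_sum.
rewrite exchange_big /=; apply: leq_sum => A _.
have -> : (\sum_(c : 'I_(2 * N + 1)) (A \in [set A : 'M['I_(2 * N + 1)]_d.+1 | valid c A] : nat))%N
   = #|[set c : 'I_(2 * N + 1) | valid c A]|.
  by rewrite card_sum; apply: eq_bigr => c _; rewrite !inE.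
have -> : (\sum_B (@tp d.+1 N A B : nat))%N = #|[set B | tp A B]|.
  by rewrite card_sum; apply: eq_bigr => B _; rewrite inE.
rewrite -(@card_in_imset _ _ (fun c : 'I_(2 * N + 1) => shiftmx c A)); last first.
  move=> c1 c2; rewrite !inE => /forallP v1 /forallP v2 /matrixP /(_ ord0 ord0).
  rewrite !mxE eqxx /addc => /(congr1 val); rewrite !val_insubd v1 v2 => /eqP.
  by rewrite eqn_add2l => /eqP h; apply: val_inj.
apply: subset_leq_card; apply/subsetP => B /imsetP[c cin ->]; rewrite inE.
apply/existsP; exists c.
by rewrite inE in cin; rewrite cin eqxx.
Qed.
Lemma big_split2 (T : finType) (F G : T -> T -> nat) :
  (\sum_A \sum_B (F A B + G A B) = \sum_A \sum_B F A B + \sum_A \sum_B G A B)%N.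
Proof. rewrite -big_split; apply: eq_bigr => A _; exact: big_split. Qed.

Lemma main_nat d N :
  (2 * #|Simg d.+1 N| * #|{: 'M['I_(2 * N + 1)]_d.+1}| + 2 * (\sum_A \sum_B (@tp d.+1 N A B : nat))
   <= commuting_count d.+1 N + 2 * (#|Simg d.+1 N| * #|Simg d.+1 N|) + #|{: 'M['I_(2 * N + 1)]_d.+1}|)%N.
Proof.
set T := 'M['I_(2 * N + 1)]_d.+1.
have H : (\sum_(A : T) \sum_(B : T) ((A \in Simg d.+1 N) + (B \in Simg d.+1 N) + tp A B + tp B A)
   <= \sum_(A : T) \sum_(B : T) (cm A B + 2 * ((A \in Simg d.+1 N) * (B \in Simg d.+1 N)) + (A == B)))%N.
  by apply: leq_sum => A _; apply: leq_sum => B _; exact: pointwise.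
rewrite count_eq.
rewrite !big_split2 in H.
set S := Simg d.+1 N in H *.
have e1 : (\sum_(A : T) \sum_(B : T) (A \in S : nat) = #|S| * #|T|)%N.
  rewrite card_sum big_distrl /=; apply: eq_bigr => A _.
  by rewrite sum_nat_const mulnC.
have e2 : (\sum_(A : T) \sum_(B : T) (B \in S : nat) = #|S| * #|T|)%N.
  by rewrite exchange_big.
have e3 : (\sum_(A : T) \sum_(B : T) (tp B A : nat) = \sum_(A : T) \sum_(B : T) (tp A B : nat))%N.
  by rewrite exchange_big.
have e4 : (\sum_(A : T) \sum_(B : T) ((A \in S) * (B \in S) : nat) = #|S| * #|S|)%N.
  rewrite {1}card_sum big_distrl /=; apply: eq_bigr => A _.
  by rewrite card_sum big_distrr.
have e5 : (\sum_(A : T) \sum_(B : T) 0 = 0)%N.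
  by rewrite big1 // => A _; rewrite big1.
have e6 : (\sum_(A : T) \sum_(B : T) (A == B : nat) = #|T|)%N.
  rewrite -sum1_card; apply: eq_bigr => A _.
  rewrite -[RHS](card1 A) card_sum; apply: eq_bigr => B _.
  by rewrite inE eq_sym.
rewrite e1 e2 e3 e4 e5 e6 in H.
move: H; clear e1 e2 e3 e4 e5 e6; set a := #|S|; set b := #|T|; set V := (\sum_A \sum_B tp A B)%N; set C := (\sum_A \sum_B cm A B)%N. nia.
Qed.
Lemma V_bound d N :
  ((2 * N + 1) ^ (d.+1 ^ 2 + 1) <= d.+2 * \sum_A \sum_B (@tp d.+1 N A B : nat))%N.
Proof.
apply: leq_trans (leq_mul (leqnn _) (V_lb d N)).
under eq_bigr => c _ do rewrite card_valid.
rewrite -big_distrl /= mulnA.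
have -> : (d.+1 ^ 2 + 1 = d.+1 * d + d.+2)%N by rewrite /= ; nia.
rewrite expnD [X in (X <= _)%N]mulnC leq_mul2r; apply/orP; right.
exact: sum_pow.
Qed.

Theorem lemma1p4 (d : nat) (hd : (2 <= d)%N) :
  exists C : rat, 0 < C /\
    forall N : nat, (0 < N)%N ->
      (2 + 2 / (d.+1)%:R - C / N%:R) * ((2 * N + 1)%:R) ^+ (d ^ 2 + 1)
        <= (commuting_count d N)%:R :> rat.
Proof.
exists 2; split => // N N0.
case: d hd => // d hd.
have hm := main_nat d N.
have hV := V_bound d N.
rewrite card_Simg card_mx card_ord in hm.
set V := (\sum_A \sum_B (@tp d.+1 N A B : nat))%N in hm hV.
set M := (2 * N + 1)%N in hm hV *.
have hK : (M ^ 2 <= M ^ (d.+1 * d.+1))%N.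
  by rewrite leq_pexp2l /M ?addn1 //; nia.
have e1 : (d.+1 ^ 2 = d.+1 * d.+1)%N by rewrite /= expnS expn1.
rewrite e1 in hV *.
set E := (d.+1 * d.+1)%N in hm hV hK *.
have := hm; rewrite -(ler_nat rat) !natrD !natrM => hmr.
have := hV; rewrite -(ler_nat rat) !natrM => hVr.
have := hK; rewrite -(ler_nat rat) => hKr.
rewrite !natrX in hmr hVr hKr *.
rewrite exprD expr1 in hVr *.
set m := (M%:R : rat) in hmr hVr hKr *.
set k := m ^+ E in hmr hVr hKr *.
set v := (V%:R : rat) in hmr hVr.
set c := ((commuting_count d.+1 N)%:R : rat) in hmr *.
have n0 : (0 < N%:R :> rat) by rewrite ltr0n.
have hmN : m = 2 * N%:R + 1 by rewrite /m /M natrD natrM.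
have hX : 2 / (d.+2)%:R * (k * m) <= 2 * v.
  rewrite -mulrA ler_pM2l // mulrC ler_pdivrMr ?ltr0n //.
  move: hVr; rewrite [k * m]mulrC [_ * v]mulrC. exact: id.
rewrite (_ : (N%:R + (N%:R + 0) + 1 : rat) = m); last by rewrite hmN; ring.
rewrite exprD expr1 -/k.
have hk0 : 0 <= k by rewrite /k exprn_ge0 // /m ler0n.
have hY : 4 * k <= 2 / N%:R * (k * m).
  have -> : 2 / N%:R * (k * m) = k * (4 + 2 / N%:R).
    by rewrite hmN; field; rewrite lt0r_neq0.
  by rewrite mulrDr [k * 4]mulrC lerDl mulr_ge0 ?divr_ge0 ?ler0n.
rewrite mulrBl mulrDl.
rewrite expr2 in hKr.
set X := 2 / d.+2%:R * (k * m) in hX *.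
set Y := 2 / N%:R * (k * m) in hY *.
have e2 : m * k = k * m by rewrite mulrC.
rewrite -mulrA e2 in hmr.
set Z := k * m in hmr hX hY *.
lra.
Qed.
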